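(* Let $q$ be a prime power and let $\Im$ be an $\{f,m;k-1,q\}$-minihyper in $PG(k-1,q)$ of rank $k'<k$. Let $S$ be the $(k'-1)$-dimensional projective subspace of $PG(k-1,q)$ spanned by the points of positive multiplicity of $\Im$, identified with $PG(k'-1,q)$, and let $\Im'$ be the restriction of $\Im$ to $S$, assumed to be an $\{f,m;k'-1,q\}$-minihyper in $S$ with $\mathrm{Rank}(\Im')=k'$. Then $$\mathfrak{e}(\Im)=q^{k-k'}\,\mathfrak{e}(\Im').$$
   Context: A multiset $\Im$ in $PG(k-1,q)$ is a map from the set of points of $PG(k-1,q)$ to the non-negative integers; for a set $Q$ of points, $\Im(Q)=\sum_{\mathbf{p}\in Q}\Im(\mathbf{p})$. $\Im$ is an $\{f,m;k-1,q\}$-minihyper if $\Im(PG(k-1,q))=f$, $\Im(H)\ge m$ for every hyperplane $H$, and $\Im(H_0)=m$ for some hyperplane $H_0$. The rank of $\Im$ is the rank of the $k\times f$ matrix whose columns are (fixed vector representatives of) the points of $\Im$, each repeated according to its multiplicity. $\mathfrak{e}(\Im)$ is the number of hyperplanes $H$ of the ambient projective space with $\Im(H)=m$ (for $\Im'$, the hyperplanes of $S$). *)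

(* Defs.v *)
(* Projective geometry PG(k-1,q) over a finite field F with #|F| = q,
   subspaces of F^k represented canonically by square matrices A with <<A>>%MS = A. *)
From mathcomp Require Import all_boot all_order all_algebra all_fingroup all_field.
Set Implicit Arguments. Unset Strict Implicit. Unset Printing Implicit Defensive.
Import GRing.Theory.
Local Open Scope ring_scope.

Section PG.
Variables (F : finFieldType) (k : nat).
Local Notation M := 'M[F]_k.

Definition canon (A : M) : bool := (<<A>>%MS == A).

Definition is_point (A : M) : bool := canon A && (\rank A == 1)%N.

Definition is_hyperplane_of (U H : M) : bool :=
  [&& canon H, (H <= U)%MS & \rank H == (\rank U).-1]%N.

Definition mass (Im : M -> nat) (Q : M) : nat :=
  (\sum_(A : M | is_point A && (A <= Q)%MS) Im A)%N.

Definition minihyper_in (U : M) (Im : M -> nat) (f m : nat) : Prop :=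
  [/\ mass Im U = f,
      (forall H, is_hyperplane_of U H -> m <= mass Im H)%N &
      exists H0, is_hyperplane_of U H0 /\ mass Im H0 = m].

Definition support_span (Im : M -> nat) : M :=
  <<(\sum_(A : M | is_point A && (0 < Im A)%N) A)%MS>>%MS.

(* rank of the k x f matrix of the points (with multiplicity) = dim of their span *)
Definition mrank (Im : M -> nat) : nat := \rank (support_span Im).

Definition restr (U : M) (Im : M -> nat) : M -> nat :=
  fun A => if (A <= U)%MS then Im A else 0%N.

Definition e_in (U : M) (Im : M -> nat) (m : nat) : nat :=
  #|[set H : M | is_hyperplane_of U H & mass Im H == m]|.

End PG.

(* Main.v *)
Require Import Defs.
From mathcomp Require Import all_boot all_order all_algebra all_fingroup all_field.
From mathcomp Require Import zify.
Set Implicit Arguments. Unset Strict Implicit. Unset Printing Implicit Defensive.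
Import GRing.Theory.
Local Open Scope ring_scope.

Section Core.
Variables (F : finFieldType) (k : nat).
Local Notation M := 'M[F]_k.

Lemma canon_eq (A B : M) : canon A -> canon B -> (A == B)%MS -> A = B.
Proof. rewrite /canon => /eqP cA /eqP cB /genmxP; by rewrite cA cB. Qed.

Lemma canon_gen m (A : 'M[F]_(m, k)) : canon <<A>>%MS.
Proof. by rewrite /canon genmx_id. Qed.

Lemma canon_cap (A B : M) : canon A -> canon B -> canon (A :&: B)%MS.
Proof. rewrite /canon => /eqP cA /eqP cB; by rewrite genmx_cap cA cB. Qed.

Lemma strict_rank m1 m2 (A : 'M[F]_(m1, k)) (B : 'M[F]_(m2, k)) :
  (A <= B)%MS -> ~~ (B <= A)%MS -> (\rank A < \rank B)%N.
Proof. by move=> sAB nBA; have := ltmxErank A B; rewrite ltmxE sAB nBA => /esym/andP[]. Qed.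

Variables (S H' : M).
Hypotheses (cS : canon S) (cH : canon H') (sHS : (H' <= S)%MS)
  (rH : \rank H' = (\rank S).-1) (rS : (0 < \rank S)%N).

Lemma core :
  #|[set H : M | is_hyperplane_of 1%:M H & (H :&: S)%MS == H']| = (#|F| ^ (k - \rank S))%N.
Proof.
have rSk : (\rank S <= k)%N := rank_leq_col S.
have [s0 [s0S s0H]] : exists s0 : 'rV[F]_k, (s0 <= S)%MS /\ ~~ (s0 <= H')%MS.
  have : ~~ (S <= H')%MS by apply/negP => /mxrankS; rewrite rH; lia.
  case/row_subPn => i ni; exists (row i S); split => //; exact: row_sub.
have SHs : (S <= H' + s0)%MS.
  rewrite -(geq_leqif (mxrank_leqif_sup _)); last by rewrite addsmx_sub sHS.
  have : (\rank H' < \rank (H' + s0))%N.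
    apply: strict_rank; first exact: addsmxSl.
    by apply: contra s0H; apply: submx_trans; apply: addsmxSr.
  rewrite rH; lia.
set T := (S^C)%MS.
have rT : \rank T = (k - \rank S)%N by rewrite mxrank_compl.
set B := row_base T.
pose C (phi : 'M[F]_(\rank T, 1)) : 'M[F]_(\rank T, k) := (B + phi *m s0)%R.
pose Hp (phi : 'M[F]_(\rank T, 1)) : M := <<(H' + C phi)%MS>>%MS.
have HpH phi : (H' <= Hp phi)%MS by rewrite genmxE addsmxSl.
have HpB phi : (C phi <= Hp phi)%MS by rewrite genmxE addsmxSr.
have full phi : row_full (Hp phi + s0)%MS.
  rewrite -sub1mx; apply: submx_trans (submx_full _ (addsmx_compl_full S)) _.
  rewrite addsmx_sub; apply/andP; split.
    apply: submx_trans SHs _; apply: addsmxS => //; exact: HpH.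
  move/eqmxP: (eq_row_base T) => /andP [_ sTB]; apply: submx_trans sTB _.
  have eB : B = (C phi + (- phi) *m s0)%R by rewrite /C mulNmx addrK.
  rewrite [X in (X <= _)%MS]eB.
  apply: addmx_sub_adds; [exact: HpB | exact: submxMl].
have rHp phi : \rank (Hp phi) = k.-1.
  apply/eqP; rewrite eqn_leq; apply/andP; split.
    rewrite mxrank_gen; apply: leq_trans (mxrank_adds_leqif _ _) _.
    have := rank_leq_row (C phi); rewrite rH; lia.
  have := full phi; rewrite /row_full => /eqP rf.
  have := mxrank_adds_leqif (Hp phi) s0; case=> + _; rewrite rf.
  have := rank_leq_row s0; lia.
have ns0 phi : ~~ (s0 <= Hp phi)%MS.
  apply/negP => s0H'; have := full phi; rewrite /row_full.
  have -> : \rank (Hp phi + s0)%MS = \rank (Hp phi).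
    by apply/eqmx_rank; rewrite addsmx_sub submx_refl s0H' addsmxSl.
  rewrite rHp; lia.
have cap phi : (Hp phi :&: S)%MS = H'.
  apply: canon_eq; [apply: canon_cap => //; exact: canon_gen | by [] |].
  have sH : (H' <= Hp phi :&: S)%MS by rewrite sub_capmx HpH sHS.
  apply/andP; split => //.
  rewrite -(geq_leqif (mxrank_leqif_sup sH)).
  have : (\rank (Hp phi :&: S) < \rank S)%N.
    apply: strict_rank; first exact: capmxSr.
    apply: contra (ns0 phi) => sS; apply: submx_trans s0S (submx_trans sS _).
    exact: capmxSl.
  rewrite rH; lia.
have inj : injective Hp.
  move=> phi psi eHp.
  have dsub : ((phi - psi) *m s0 <= H')%MS.
    rewrite -(cap phi) sub_capmx; apply/andP; split; last first.
      exact: submx_trans (submxMl _ _) s0S.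
    have -> : ((phi - psi) *m s0 = C phi - C psi)%R.
      by rewrite /C mulmxBl opprD addrACA subrr add0r.
    apply: addmx_sub; first exact: HpB.
    by rewrite eqmx_opp eHp; exact: HpB.
  apply/eqP; rewrite -subr_eq0; apply/negPn/negP => nz.
  have : row_full (phi - psi).
    rewrite /row_full eqn_leq rank_leq_col lt0n mxrank_eq0 //.
  case/row_fullP => w ew.
  move: s0H; rewrite -[s0]mul1mx -ew -mulmxA.
  by rewrite (submx_trans (submxMl _ _) dsub).
have surj H : is_hyperplane_of 1%:M H -> (H :&: S)%MS == H' -> exists phi, H = Hp phi.
  case/and3P => cH0 _ rH0 /eqP eH.
  have ns : ~~ (s0 <= H)%MS.
    by apply: contra s0H => sH; rewrite -eH sub_capmx sH s0S.
  have fH : row_full (H + s0)%MS.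
    have := strict_rank (addsmxSl H s0) (contra (submx_trans (addsmxSr H s0)) ns).
    rewrite (eqP rH0) mxrank1 /row_full eqn_leq rank_leq_col.
    have : (0 < k)%N by lia.
    lia.
  have /sub_addsmxP [u eu] := submx_full B fH.
  exists (- u.2)%R; apply: canon_eq => //; first exact: canon_gen.
  have sub : (Hp (- u.2)%R <= H)%MS.
    rewrite genmxE addsmx_sub; apply/andP; split.
      by rewrite -eH capmxSl.
    by rewrite /C eu mulNmx addrK submxMl.
  rewrite sub andbT -(geq_leqif (mxrank_leqif_sup sub)) rHp (eqP rH0) mxrank1 //.
have -> : [set H : M | is_hyperplane_of 1%:M H & (H :&: S)%MS == H'] = Hp @: setT.
  apply/setP => H; rewrite inE; apply/andP/imsetP.
    by case=> hH eH; have [phi ->] := surj H hH eH; exists phi.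
  case=> phi _ ->; split; last by rewrite cap.
  by rewrite /is_hyperplane_of canon_gen submx1 rHp mxrank1 eqxx.
by rewrite card_imset // cardsT card_mx rT muln1.
Qed.
End Core.

Theorem lemma6 (F : finFieldType) (k k' f m : nat) (Im : 'M[F]_k -> nat) :
  (0 < k')%N -> (k' < k)%N ->
  minihyper_in 1%:M Im f m ->
  mrank Im = k' ->
  minihyper_in (support_span Im) (restr (support_span Im) Im) f m ->
  mrank (restr (support_span Im) Im) = k' ->
  e_in 1%:M Im m = (#|F| ^ (k - k') * e_in (support_span Im) (restr (support_span Im) Im) m)%N.
Proof.
move=> k'0 k'k _ rk [fS _ [H0 [hH0 mH0]]] _.
set S := support_span Im in fS hH0 mH0 *.
have rS : \rank S = k' by [].
have cS : canon S by apply: canon_gen.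
have pos A : is_point A -> (0 < Im A)%N -> (A <= S)%MS.
  by move=> pA iA; rewrite genmxE (sumsmx_sup A) ?pA ?iA.
have restrE Q : mass (restr S Im) Q = mass Im Q.
  apply: eq_bigr => A /andP [pA _]; rewrite /restr; case: ifP => // nS.
  by case: (posnP (Im A)) => // /(pos A pA); rewrite nS.
have massE Q : mass Im Q = mass Im (Q :&: S)%MS.
  rewrite /mass [LHS]big_mkcond [RHS]big_mkcond; apply: eq_bigr => A _.
  rewrite sub_capmx; case pA : (is_point A) => //=.
  case sQ : (A <= Q)%MS => //=; case sS : (A <= S)%MS => //.
  by case: (posnP (Im A)) => // /(pos A pA); rewrite sS.
rewrite restrE in fS; rewrite restrE in mH0.
have mf : m != f.
  case/and3P: hH0 => _ sH0 rH0.
  have : ~~ (S <= H0)%MS by apply/negP => /mxrankS; rewrite (eqP rH0) rS; lia.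
  case: (boolP [exists A, [&& is_point A, (0 < Im A)%N & ~~ (A <= H0)%MS]]) => [/existsP [A /and3P [pA iA nA]] _ | /existsPn allA].
    rewrite -fS -mH0 /mass.
    rewrite [X in _ != X](bigID (fun A => A <= H0)%MS) /=.
    have -> : (\sum_(i | is_point i && (i <= S)%MS && (i <= H0)%MS) Im i =
               \sum_(i | is_point i && (i <= H0)%MS) Im i)%N.
      apply: eq_bigl => B; case: (is_point B) => //=; case sB : (B <= H0)%MS; rewrite ?andbT ?andbF ?(submx_trans sB sH0) //.
    rewrite [X in (_ + X)%N](bigD1 A) /=; last by rewrite pA (pos A pA iA) nA.
    rewrite neq_ltn; apply/orP; left; lia.
  case/negP; rewrite genmxE; apply/sumsmx_subP => A /andP [pA iA].
  by move: (allA A); rewrite pA iA /= negbK.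
have hypcap H : is_hyperplane_of 1%:M H -> mass Im H == m -> is_hyperplane_of S (H :&: S)%MS.
  case/and3P => cH _ rH eM.
  have nS : ~~ (S <= H)%MS.
    apply/negP => sSH; move: eM; rewrite massE.
    have -> : mass Im (H :&: S)%MS = mass Im S.
      apply: eq_bigl => A; rewrite sub_capmx.
      by case sA : (A <= S)%MS; [rewrite (submx_trans sA sSH) | rewrite !andbF].
    by rewrite fS eq_sym (negbTE mf).
  rewrite /is_hyperplane_of canon_cap // capmxSr /=.
  have := mxrank_sum_cap H S.
  have := strict_rank (addsmxSl H S) (contra (submx_trans (addsmxSr H S)) nS).
  have := rank_leq_col (H + S)%MS.
  move: rH; rewrite mxrank1 rS => /eqP rH.
  lia.
rewrite /e_in; set q := #|F|; rewrite -!sum1_card.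
rewrite (partition_big (fun H => H :&: S)%MS (fun H' => H' \in [set H' | is_hyperplane_of S H' & mass (restr S Im) H' == m])); last first.
  move=> H; rewrite !inE => /andP [h e]; by rewrite hypcap // restrE -massE e.
rewrite (eq_bigr (fun _ => q ^ (k - k'))%N); last first.
  move=> j; rewrite inE => /andP [hj mj].
  case/and3P: hj => cj sj /eqP rj.
  rewrite -rS -(core cS cj sj rj) ?rS // -sum1_card; apply: eq_bigl => H; rewrite !inE.
  case e : ((H :&: S)%MS == j); rewrite ?andbF ?andbT //.
  by rewrite massE (eqP e) -restrE mj andbT.
by rewrite !sum_nat_const muln1 mulnC.
Qed.
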